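(* Let $N,n_{\mathrm{el}}\ge1$, masses $m_1,\dots,m_N>0$ and $M=\mathrm{diag}(m_1I_3,\dots,m_NI_3)\in\mathbb{R}^{3N\times3N}$. Let $V_{\mathrm{ext}}:\mathbb{R}^{3N}\to\mathbb{R}$ be continuously differentiable. For $i=1,\dots,n_{\mathrm{el}}$ let $k_i>0$, $l_{0,i}>0$ and constants $a_{ij}\in\mathbb{R}$ ($j=1,\dots,N$). Writing $q=(q_1,\dots,q_N)$, $v=(v_1,\dots,v_N)$ with $q_j,v_j\in\mathbb{R}^3$, define $\tilde C_i(q)=\frac{\bar q_i\cdot\bar q_i}{l_{0,i}^2}$ with $\bar q_i=\sum_{j=1}^Na_{ij}q_j$, and $V_{\mathrm{int}}(C)=\sum_{i=1}^{n_{\mathrm{el}}}\frac{k_il_{0,i}}{4}(C_i-\ln C_i-1)$ for $C\in(0,\infty)^{n_{\mathrm{el}}}$. Let $(q,v,C)$ be a $C^1$ solution on $[t_0,t_{\mathrm{end}}]$ (with $C(t)\in(0,\infty)^{n_{\mathrm{el}}}$) of $$\dot q=v,\qquad M\dot v=-\nabla V_{\mathrm{ext}}(q)-D\tilde C(q)^{\mathrm T}\nabla V_{\mathrm{int}}(C),\qquad \dot C=D\tilde C(q)\,v,$$ where $D\tilde C(q)$ is the Jacobian of $\tilde C$. Let $L=\sum_{k=1}^N q_k\times m_kv_k$ be the total angular momentum. Then $\frac{d}{dt}L=-\sum_{k=1}^N q_k\times\nabla_{q_k}V_{\mathrm{ext}}(q)$. Consequently, if there is a constant vector $b\in\mathbb{R}^3$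 with $-\nabla_{q_k}V_{\mathrm{ext}}(q)=b$ for all $k$ and all $q$, then $\frac{d}{dt}(L\cdot b)=0$.
   Context: $\nabla_{q_k}V_{\mathrm{ext}}(q)\in\mathbb{R}^3$ denotes the $k$-th three-dimensional block of the gradient $\nabla V_{\mathrm{ext}}(q)\in\mathbb{R}^{3N}$. The system is the input-free port-Hamiltonian model of $N$ point masses connected by $n_{\mathrm{el}}$ hyperelastic springs with strains $C$ as independent state. *)

(* Defs.v *)
From HB Require Import structures.
From mathcomp Require Import all_boot all_order all_algebra.
From mathcomp Require Import all_classical all_reals all_analysis.
Set Implicit Arguments. Unset Strict Implicit. Unset Printing Implicit Defensive.
Import Order.TTheory GRing.Theory Num.Theory.
Import numFieldNormedType.Exports.
Local Open Scope classical_set_scope.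
Local Open Scope ring_scope.

(* Configurations q = (q_1,...,q_N) in R^{3N} are represented as N x 3
   matrices: row k is q_k in R^3. *)

Section Defs.
Variable R : realType.

Definition dot3 (x y : 'rV[R]_3) : R := \sum_(c < 3) x 0 c * y 0 c.

Definition cross3 (x y : 'rV[R]_3) : 'rV[R]_3 :=
  \row_(c < 3)
    (if c == 0 :> nat then x 0 (inord 1) * y 0 (inord 2) - x 0 (inord 2) * y 0 (inord 1)
     else if c == 1 :> nat then x 0 (inord 2) * y 0 (inord 0) - x 0 (inord 0) * y 0 (inord 2)
     else x 0 (inord 0) * y 0 (inord 1) - x 0 (inord 1) * y 0 (inord 0)).

(* gradient of f : R^{3N} -> R, via partial derivatives; entry (k,c) is
   d f / d q_{k,c}, so row k is the block nabla_{q_k} f *)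
Definition gradM (N : nat) (f : 'M[R]_(N, 3) -> R) (q : 'M[R]_(N, 3)) : 'M[R]_(N, 3) :=
  \matrix_(k < N, c < 3) ('D_(delta_mx k c) f q).

Definition gradV (n : nat) (g : 'rV[R]_n -> R) (C : 'rV[R]_n) : 'rV[R]_n :=
  \row_(i < n) ('D_(delta_mx 0 i) g C).

Definition qbar (nel N : nat) (a : 'M[R]_(nel, N)) (q : 'M[R]_(N, 3)) (i : 'I_nel)
  : 'rV[R]_3 := \sum_(j < N) a i j *: row j q.

Definition Ctilde (nel N : nat) (a : 'M[R]_(nel, N)) (l0 : 'I_nel -> R)
  (q : 'M[R]_(N, 3)) : 'rV[R]_nel :=
  \row_(i < nel) (dot3 (qbar a q i) (qbar a q i) / (l0 i ^+ 2)).

Definition jacCt (nel N : nat) (a : 'M[R]_(nel, N)) (l0 : 'I_nel -> R)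
  (q : 'M[R]_(N, 3)) (i : 'I_nel) (k : 'I_N) (c : 'I_3) : R :=
  'D_(delta_mx k c) (fun x => Ctilde a l0 x 0 i) q.

Definition jacCt_mul (nel N : nat) (a : 'M[R]_(nel, N)) (l0 : 'I_nel -> R)
  (q v : 'M[R]_(N, 3)) : 'rV[R]_nel :=
  \row_(i < nel) \sum_(k < N) \sum_(c < 3) jacCt a l0 q i k c * v k c.

(* D tilde C(q)^T w, reshaped as an N x 3 matrix *)
Definition jacCt_tmul (nel N : nat) (a : 'M[R]_(nel, N)) (l0 : 'I_nel -> R)
  (q : 'M[R]_(N, 3)) (w : 'rV[R]_nel) : 'M[R]_(N, 3) :=
  \matrix_(k < N, c < 3) \sum_(i < nel) jacCt a l0 q i k c * w 0 i.

Definition Vint (nel : nat) (kk l0 : 'I_nel -> R) (C : 'rV[R]_nel) : R :=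
  \sum_(i < nel) (kk i * l0 i / 4) * (C 0 i - ln (C 0 i) - 1).

(* M X for M = diag(m_1 I_3, ..., m_N I_3), X in R^{3N} as N x 3 matrix *)
Definition massmul (N : nat) (m : 'I_N -> R) (X : 'M[R]_(N, 3)) : 'M[R]_(N, 3) :=
  \matrix_(k < N, c < 3) (m k * X k c).

Definition angmom (N : nat) (m : 'I_N -> R) (q v : 'M[R]_(N, 3)) : 'rV[R]_3 :=
  \sum_(k < N) cross3 (row k q) (m k *: row k v).

(* derivative of f : R -> V within the set I at every point of I
   (one-sided at endpoints of an interval) *)
Definition has_deriv_on (V : normedModType R) (I : set R) (f f' : R -> V) : Prop :=
  forall t, I t ->
    (fun h : R => h^-1 *: (f (t + h) - f t)) @ within (fun h => I (t + h)) ((0 : R)^')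
      --> f' t.

End Defs.

(* Main.v *)
Require Import Defs.
From HB Require Import structures.
From mathcomp Require Import all_boot all_order all_algebra.
From mathcomp Require Import all_classical all_reals all_analysis.
From mathcomp Require Import ring lra.
Set Implicit Arguments. Unset Strict Implicit. Unset Printing Implicit Defensive.
Import Order.TTheory GRing.Theory Num.Theory.
Import numFieldNormedType.Exports.
Local Open Scope classical_set_scope.
Local Open Scope ring_scope.

#[local] Instance dnbhs_F (R : realType) (x : R) : Filter (x^') := dnbhs_filter x.
#[local] Instance FW (R : realType) (D : set R) : Filter (within D ((0:R)^')).
Proof. apply: within_filter; exact: dnbhs_filter. Qed.

Section HD.
Variable R : realType.
Variable I : set R.
Implicit Types (V : normedModType R).


Lemma hd_ext V (f f' g' : R -> V) : (forall t, I t -> f' t = g' t) ->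
  has_deriv_on I f f' -> has_deriv_on I f g'.
Proof. by move=> e H t It; rewrite -e //; exact: H. Qed.

Lemma hd_cst V (c : V) : has_deriv_on I (fun _ => c) (fun _ => 0).
Proof.
move=> t It; rewrite (_ : (fun h : R => _) = fun _ => 0); first exact: cvg_cst.
by apply/funext => h; rewrite subrr scaler0.
Qed.

Lemma hd_add V (f g f' g' : R -> V) : has_deriv_on I f f' -> has_deriv_on I g g' ->
  has_deriv_on I (fun t => f t + g t) (fun t => f' t + g' t).
Proof.
move=> Hf Hg t It.
rewrite (_ : (fun h : R => _) = (fun h => h^-1 *: (f (t + h) - f t) + h^-1 *: (g (t + h) - g t))).
  exact: cvgD (Hf t It) (Hg t It).
by apply/funext => h /=; rewrite -scalerDr opprD addrACA.
Qed.

Lemma hd_scale V (c : R) (f f' : R -> V) : has_deriv_on I f f' ->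
  has_deriv_on I (fun t => c *: f t) (fun t => c *: f' t).
Proof.
move=> Hf t It.
rewrite (_ : (fun h : R => _) = (fun h => c *: (h^-1 *: (f (t + h) - f t)))).
  exact: cvgZl_tmp (Hf t It).
by apply/funext => h /=; rewrite -scalerBr !scalerA mulrC.
Qed.

Lemma hd_sum V (J : Type) (r : seq J) (f f' : J -> R -> V) :
  (forall i, has_deriv_on I (f i) (f' i)) ->
  has_deriv_on I (fun t => \sum_(i <- r) f i t) (fun t => \sum_(i <- r) f' i t).
Proof.
move=> H; elim: r => [|x r IH].
  rewrite (_ : (fun t => _) = fun _ => 0); last by apply/funext => t; rewrite big_nil.
  apply: hd_ext (hd_cst 0) => t _; by rewrite !big_nil.
rewrite (_ : (fun t => _) = fun t => f x t + \sum_(i <- r) f i t); last first.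
  by apply/funext => t; rewrite big_cons.
apply: hd_ext (hd_add (H x) IH) => t _; by rewrite big_cons.
Qed.

Lemma hd_cont V (f f' : R -> V) t : has_deriv_on I f f' -> I t ->
  (fun h => f (t + h)) @ within (fun h => I (t + h)) ((0 : R)^') --> f t.
Proof.
move=> Hf It.
have Hid : (fun h : R => h) @ within (fun h => I (t + h)) ((0 : R)^') --> (0 : R).
  exact: (@cvg_within_filter _ _ (fun h : R => h) ((0:R)^') _ _ _ (@nbhs_dnbhs R 0)).
have HH := cvgD (cvg_cst (f t)) (cvgZ Hid (Hf t It)).
rewrite scale0r addr0 in HH.
have EQ : \forall h \near within (fun h => I (t + h)) ((0 : R)^'),
   f t + h *: (h^-1 *: (f (t + h) - f t)) = f (t + h).
  rewrite near_withinE; near=> h => _ /=.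
  have : h != 0 by near: h; exact: nbhs_dnbhs_neq.
  by move=> h0; rewrite scalerA mulfV // scale1r addrC subrK.
exact: cvg_trans (near_eq_cvg EQ) (HH _ _ _).
Unshelve. all: by end_near.
Qed.

Lemma hd_mul (f g f' g' : R -> R) : has_deriv_on I f f' -> has_deriv_on I g g' ->
  has_deriv_on I (fun t => f t * g t) (fun t => f' t * g t + f t * g' t).
Proof.
move=> Hf Hg t It.
rewrite (_ : (fun h : R => _) = (fun h => (h^-1 *: (f (t + h) - f t)) * g (t + h) + f t * (h^-1 *: (g (t + h) - g t)))).
  apply: cvgD; first exact: cvgM (Hf t It) (hd_cont Hg It).
  exact: cvgMl_tmp (Hg t It).
apply/funext => h /=; rewrite /GRing.scale /=.
ring.
Qed.


Lemma hd_scalel V (c : V) (f f' : R -> R) : has_deriv_on I f f' ->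
  has_deriv_on I (fun t => f t *: c) (fun t => f' t *: c).
Proof.
move=> Hf t It.
rewrite (_ : (fun h : R => _) = (fun h => (h^-1 *: (f (t + h) - f t)) *: c)).
  exact: cvgZr_tmp (Hf t It).
by apply/funext => h /=; rewrite -scalerBl scalerA.
Qed.

Lemma hd_entry m n (F F' : R -> 'M[R]_(m, n)) i j : has_deriv_on I F F' ->
  has_deriv_on I (fun t => F t i j) (fun t => F' t i j).
Proof.
move=> Hf t It.
rewrite (_ : (fun h : R => _) = (fun M : 'M[R]_(m, n) => M i j) \o (fun h => h^-1 *: (F (t + h) - F t))).
  exact: continuous_cvg (@coord_continuous R m n i j (F' t)) (Hf t It).
by apply/funext => h /=; rewrite !mxE.
Qed.

Lemma hd_mx m n (F F' : R -> 'M[R]_(m, n)) :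
  (forall i j, has_deriv_on I (fun t => F t i j) (fun t => F' t i j)) ->
  has_deriv_on I F F'.
Proof.
move=> H.
rewrite (_ : F = fun t => \sum_i \sum_j F t i j *: delta_mx i j); last first.
  by apply/funext => t; rewrite -matrix_sum_delta.
have := @hd_sum _ _ (index_enum 'I_m) (fun i t => \sum_j F t i j *: delta_mx i j)
  (fun i t => \sum_j F' t i j *: delta_mx i j).
move=> /(_ _)/hd_ext; apply.
  by move=> t _ /=; rewrite [RHS]matrix_sum_delta.
by move=> i; apply: hd_sum => j; apply: hd_scalel; exact: H.
Qed.

End HD.

Section Alg.
Variable R : realType.
Implicit Types (x y z : 'rV[R]_3).

Lemma sum3 (f : 'I_3 -> R) : \sum_c f c = f (inord 0) + f (inord 1) + f (inord 2).
Proof.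
rewrite !big_ord_recr big_ord0 /= add0r.
by congr (f _ + f _ + f _); apply/val_inj; rewrite /= inordK.
Qed.

Lemma cr0 x y : cross3 x y 0 (inord 0) = x 0 (inord 1) * y 0 (inord 2) - x 0 (inord 2) * y 0 (inord 1).
Proof. by rewrite mxE inordK. Qed.
Lemma cr1 x y : cross3 x y 0 (inord 1) = x 0 (inord 2) * y 0 (inord 0) - x 0 (inord 0) * y 0 (inord 2).
Proof. by rewrite mxE inordK. Qed.
Lemma cr2 x y : cross3 x y 0 (inord 2) = x 0 (inord 0) * y 0 (inord 1) - x 0 (inord 1) * y 0 (inord 0).
Proof. by rewrite mxE inordK. Qed.

Lemma ord3P (P : 'I_3 -> Prop) : P (inord 0) -> P (inord 1) -> P (inord 2) -> forall c, P c.
Proof.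
move=> H0 H1 H2 [[|[|[|n]]] Hn] //.
- by rewrite (_ : Ordinal Hn = inord 0) //; apply/val_inj; rewrite /= inordK.
- by rewrite (_ : Ordinal Hn = inord 1) //; apply/val_inj; rewrite /= inordK.
- by rewrite (_ : Ordinal Hn = inord 2) //; apply/val_inj; rewrite /= inordK.
Qed.

Ltac crtac := apply/rowP; apply: ord3P; rewrite !mxE ?inordK //=; ring.

Lemma cross3Dr x y z : cross3 x (y + z) = cross3 x y + cross3 x z.
Proof. crtac. Qed.
Lemma cross3Dl x y z : cross3 (x + y) z = cross3 x z + cross3 y z.
Proof. crtac. Qed.
Lemma cross3Zr x y (s : R) : cross3 x (s *: y) = s *: cross3 x y.
Proof. crtac. Qed.
Lemma cross3Zl x y (s : R) : cross3 (s *: x) y = s *: cross3 x y.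
Proof. crtac. Qed.
Lemma cross3Nr x y : cross3 x (- y) = - cross3 x y.
Proof. crtac. Qed.
Lemma cross3xx x : cross3 x x = 0.
Proof. crtac. Qed.
Lemma cross30r x : cross3 x 0 = 0.
Proof. crtac. Qed.
Lemma cross30l x : cross3 0 x = 0.
Proof. crtac. Qed.

Lemma cross3_sumr (J : Type) (r : seq J) (f : J -> 'rV[R]_3) x :
  cross3 x (\sum_(i <- r) f i) = \sum_(i <- r) cross3 x (f i).
Proof.
elim: r => [|j r IH]; first by rewrite !big_nil cross30r.
by rewrite !big_cons cross3Dr IH.
Qed.
Lemma cross3_suml (J : Type) (r : seq J) (f : J -> 'rV[R]_3) x :
  cross3 (\sum_(i <- r) f i) x = \sum_(i <- r) cross3 (f i) x.
Proof.
elim: r => [|j r IH]; first by rewrite !big_nil cross30l.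
by rewrite !big_cons cross3Dl IH.
Qed.

Lemma dot3_cross x b : dot3 (cross3 x b) b = 0.
Proof. rewrite /dot3 sum3 cr0 cr1 cr2; ring. Qed.

Lemma dot3_delta x (c : 'I_3) : dot3 x (delta_mx 0 c) = x 0 c.
Proof.
rewrite /dot3 (bigD1 c) //= big1 ?addr0; first by rewrite mxE !eqxx mulr1.
by move=> j /negbTE jc; rewrite mxE jc andbF mulr0.
Qed.

Lemma dot3_sq x (s : R) (c : 'I_3) :
  dot3 (x + s *: delta_mx 0 c) (x + s *: delta_mx 0 c) = dot3 x x + 2 * s * x 0 c + s ^+ 2.
Proof.
have E : forall y, dot3 y (x + s *: delta_mx 0 c) = dot3 y x + s * y 0 c.
  move=> y; rewrite /dot3 -dot3_delta /dot3 mulr_sumr -big_split /=.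
  by apply: eq_bigr => j _; rewrite !mxE; ring.
rewrite E /dot3.
rewrite (_ : \sum_(c0 < 3) (x + s *: delta_mx 0 c) 0 c0 * x 0 c0 = \sum_(c0 < 3) x 0 c0 * x 0 c0 + s * x 0 c).
  rewrite !mxE !eqxx /=; ring.
rewrite -(dot3_delta x c) /dot3 mulr_sumr -big_split /=.
by apply: eq_bigr => j _; rewrite !mxE; ring.
Qed.

End Alg.

Section Jac.
Variable R : realType.
Variables (nel N : nat) (a : 'M[R]_(nel, N)) (l0 : 'I_nel -> R).

Lemma qbarD x y i : qbar a (x + y) i = qbar a x i + qbar a y i.
Proof.
rewrite /qbar -big_split; apply: eq_bigr => j _ /=; rewrite -scalerDr; congr (_ *: _).
by apply/rowP => c; rewrite !mxE.
Qed.

Lemma qbarZ (s : R) y i : qbar a (s *: y) i = s *: qbar a y i.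
Proof.
rewrite /qbar scaler_sumr; apply: eq_bigr => j _ /=; rewrite scalerA mulrC -scalerA; congr (_ *: _).
by apply/rowP => c; rewrite !mxE.
Qed.

Lemma qbar_delta i k c : qbar a (delta_mx k c) i = a i k *: delta_mx 0 c.
Proof.
rewrite /qbar (bigD1 k) //= big1 ?addr0.
  by congr (_ *: _); apply/rowP => c'; rewrite !mxE eqxx.
move=> j /negbTE jk; apply/rowP => cc; by rewrite !mxE jk /= mulr0.
Qed.

Lemma jacCtE q i k c : jacCt a l0 q i k c = 2 * a i k * qbar a q i 0 c / l0 i ^+ 2.
Proof.
rewrite /jacCt /derive /=.
apply: cvg_lim => //.
set P := qbar a q i.
have Hid : (fun h : R => h) @ (0:R)^' --> (0 : R) by exact: (@nbhs_dnbhs R 0).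
have HH : (fun h : R => (2 * a i k * P 0 c + h * a i k ^+ 2) / l0 i ^+ 2) @ (0:R)^' -->
   2 * a i k * P 0 c / l0 i ^+ 2.
  have := cvgMr_tmp (b:=(l0 i ^+ 2)^-1) (cvgD (cvg_cst (2 * a i k * P 0 c)) (cvgMr_tmp (b:=a i k ^+ 2) Hid)).
  by move=> /(_ _ _ _ _); rewrite mul0r addr0; apply.
apply: cvg_trans HH; apply: near_eq_cvg; near=> h.
have h0 : h != 0 by near: h; exact: nbhs_dnbhs_neq.
rewrite /shift /= !mxE qbarD qbarZ qbar_delta -/P scalerA [_ *: _ + P]addrC dot3_sq.
set L := (l0 i ^+ 2)^-1; rewrite /GRing.scale /=; field.
Unshelve. all: by end_near.
Qed.
End Jac.

Section Main.
Variable R : realType.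
Variable I : set R.

Lemma hd_sub (V : normedModType R) (f g f' g' : R -> V) : has_deriv_on I f f' -> has_deriv_on I g g' ->
  has_deriv_on I (fun t => f t - g t) (fun t => f' t - g' t).
Proof.
move=> Hf Hg; have := hd_add Hf (hd_scale (c:=-1) Hg).
rewrite (_ : (fun t => f t + (-1) *: g t) = (fun t => f t - g t)); last first.
  by apply/funext => t; rewrite scaleN1r.
by apply: hd_ext => t _; rewrite scaleN1r.
Qed.

Lemma hd_cross (x y x' y' : R -> 'rV[R]_3) : has_deriv_on I x x' -> has_deriv_on I y y' ->
  has_deriv_on I (fun t => cross3 (x t) (y t)) (fun t => cross3 (x' t) (y t) + cross3 (x t) (y' t)).
Proof.
move=> Hx Hy; apply: hd_mx => i; have -> : i = 0 by rewrite (ord1 i); apply/val_inj.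
apply: ord3P.
- rewrite (_ : (fun t => _) = fun t => x t 0 (inord 1) * y t 0 (inord 2) - x t 0 (inord 2) * y t 0 (inord 1)); last first.
    by apply/funext => t; rewrite cr0.
  apply: (hd_ext _ (hd_sub (hd_mul (hd_entry (i:=0) (j:=inord 1) Hx) (hd_entry (i:=0) (j:=inord 2) Hy))
                           (hd_mul (hd_entry (i:=0) (j:=inord 2) Hx) (hd_entry (i:=0) (j:=inord 1) Hy)))).
  by move=> t _ /=; rewrite mxE cr0 cr0; ring.
- rewrite (_ : (fun t => _) = fun t => x t 0 (inord 2) * y t 0 (inord 0) - x t 0 (inord 0) * y t 0 (inord 2)); last first.
    by apply/funext => t; rewrite cr1.
  apply: (hd_ext _ (hd_sub (hd_mul (hd_entry (i:=0) (j:=inord 2) Hx) (hd_entry (i:=0) (j:=inord 0) Hy))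
                           (hd_mul (hd_entry (i:=0) (j:=inord 0) Hx) (hd_entry (i:=0) (j:=inord 2) Hy)))).
  by move=> t _ /=; rewrite mxE cr1 cr1; ring.
- rewrite (_ : (fun t => _) = fun t => x t 0 (inord 0) * y t 0 (inord 1) - x t 0 (inord 1) * y t 0 (inord 0)); last first.
    by apply/funext => t; rewrite cr2.
  apply: (hd_ext _ (hd_sub (hd_mul (hd_entry (i:=0) (j:=inord 0) Hx) (hd_entry (i:=0) (j:=inord 1) Hy))
                           (hd_mul (hd_entry (i:=0) (j:=inord 1) Hx) (hd_entry (i:=0) (j:=inord 0) Hy)))).
  by move=> t _ /=; rewrite mxE cr2 cr2; ring.
Qed.

End Main.

Lemma row_jac (R : realType) nel N (a : 'M[R]_(nel, N)) l0 q w k :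
  row k (jacCt_tmul a l0 q w) = \sum_i (2 * a i k * w 0 i / l0 i ^+ 2) *: qbar a q i.
Proof.
apply/rowP => c; rewrite !mxE summxE; apply: eq_bigr => i _.
rewrite jacCtE !mxE; ring.
Qed.

Lemma jac_cross (R : realType) nel N (a : 'M[R]_(nel, N)) l0 q w :
  \sum_k cross3 (row k q) (row k (jacCt_tmul a l0 q w)) = 0.
Proof.
under eq_bigr do rewrite row_jac cross3_sumr.
rewrite exchange_big /=; apply: big1 => i _.
rewrite (eq_bigr (fun k => (2 * w 0 i / l0 i ^+ 2) *: cross3 (a i k *: row k q) (qbar a q i))); last first.
  move=> k _; rewrite cross3Zr cross3Zl scalerA; congr (_ *: _); ring.
by rewrite -scaler_sumr -cross3_suml -/(qbar a q i) cross3xx scaler0.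
Qed.

Lemma dot3_suml (R : realType) (J : Type) (r : seq J) (f : J -> 'rV[R]_3) b :
  dot3 (\sum_(i <- r) f i) b = \sum_(i <- r) dot3 (f i) b.
Proof.
rewrite /dot3; under eq_bigr do rewrite summxE mulr_suml.
by rewrite exchange_big.
Qed.

Lemma rowNB (R : realType) N (A B : 'M[R]_(N, 3)) k : row k (- A - B) = - row k A - row k B.
Proof. by apply/rowP => c; rewrite !mxE. Qed.

Theorem mainTheorem2 (R : realType) (N nel : nat)
  (m : 'I_N -> R) (Vext : 'M[R]_(N, 3) -> R)
  (kk l0 : 'I_nel -> R) (a : 'M[R]_(nel, N))
  (t0 tend : R)
  (q v vd : R -> 'M[R]_(N, 3)) (C Cd : R -> 'rV[R]_nel) :
  (0 < N)%N -> (0 < nel)%N ->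
  (forall k, 0 < m k) ->
  (* V_ext is continuously differentiable *)
  (forall x, differentiable Vext x) ->
  (forall k c, continuous (fun x => 'D_(delta_mx k c) Vext x)) ->
  (forall i, 0 < kk i) -> (forall i, 0 < l0 i) ->
  (* (q, v, C) is a C^1 solution on [t0, tend] *)
  {within `[t0, tend], continuous q} ->
  {within `[t0, tend], continuous v} ->
  {within `[t0, tend], continuous vd} ->
  {within `[t0, tend], continuous C} ->
  {within `[t0, tend], continuous Cd} ->
  has_deriv_on `[t0, tend] q v ->
  has_deriv_on `[t0, tend] v vd ->
  has_deriv_on `[t0, tend] C Cd ->
  (forall t, t \in `[t0, tend] -> forall i, 0 < C t 0 i) ->
  (forall t, t \in `[t0, tend] ->
     massmul m (vd t) = - gradM Vext (q t) - jacCt_tmul a l0 (q t) (gradV (Vint kk l0) (C t))) ->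
  (forall t, t \in `[t0, tend] -> Cd t = jacCt_mul a l0 (q t) (v t)) ->
  has_deriv_on `[t0, tend] (fun t => angmom m (q t) (v t))
    (fun t => - \sum_(k < N) cross3 (row k (q t)) (row k (gradM Vext (q t))))
  /\
  (forall b : 'rV[R]_3,
     (forall k x, - row k (gradM Vext x) = b) ->
     has_deriv_on `[t0, tend] (fun t => dot3 (angmom m (q t) (v t)) b) (fun _ => 0)).
Proof.
move=> _ _ _ _ _ _ _ _ _ _ _ _ Hq Hv _ _ Hvd _.
have Hrow : forall (F F' : R -> 'M[R]_(N, 3)) k, has_deriv_on `[t0, tend] F F' ->
    has_deriv_on `[t0, tend] (fun t => row k (F t)) (fun t => row k (F' t)).
  move=> F F' k HF; apply: hd_mx => i j.
  rewrite (_ : (fun t => _) = fun t => F t k j); last by apply/funext => t; rewrite mxE.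
  by apply: hd_ext (hd_entry (i:=k) (j:=j) HF) => t _; rewrite mxE.
have H1 : has_deriv_on `[t0, tend] (fun t => angmom m (q t) (v t))
   (fun t => \sum_k (cross3 (row k (v t)) (m k *: row k (v t)) + cross3 (row k (q t)) (m k *: row k (vd t)))).
  rewrite /angmom; apply: hd_sum => k.
  exact: hd_cross (Hrow _ _ k Hq) (hd_scale (c:=m k) (Hrow _ _ k Hv)).
have H2 : has_deriv_on `[t0, tend] (fun t => angmom m (q t) (v t))
    (fun t => - \sum_(k < N) cross3 (row k (q t)) (row k (gradM Vext (q t)))).
  apply: hd_ext H1 => t It.
  have -> : \sum_k (cross3 (row k (v t)) (m k *: row k (v t)) + cross3 (row k (q t)) (m k *: row k (vd t)))
      = \sum_k (- cross3 (row k (q t)) (row k (gradM Vext (q t))) -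
                cross3 (row k (q t)) (row k (jacCt_tmul a l0 (q t) (gradV (Vint kk l0) (C t))))).
    apply: eq_bigr => k _.
    rewrite cross3Zr cross3xx scaler0 add0r.
    have -> : m k *: row k (vd t) = row k (massmul m (vd t)) by apply/rowP => c; rewrite !mxE.
    by rewrite Hvd ?inE // rowNB cross3Dr cross3Nr cross3Nr.
  by rewrite big_split /= !sumrN jac_cross oppr0 addr0.
split => // b Hb.
rewrite /dot3.
have := @hd_sum R `[t0, tend] _ _ (index_enum 'I_3) (fun c t => angmom m (q t) (v t) 0 c * b 0 c)
  (fun c t => (- \sum_(k < N) cross3 (row k (q t)) (row k (gradM Vext (q t)))) 0 c * b 0 c + angmom m (q t) (v t) 0 c * 0).
move=> /(_ _)/hd_ext; apply.
  move=> t _ /=.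
  under eq_bigr do rewrite mulr0 addr0.
  have -> : \sum_k cross3 (row k (q t)) (row k (gradM Vext (q t))) = - \sum_k cross3 (row k (q t)) b.
    rewrite -sumrN; apply: eq_bigr => k _.
    by rewrite -(Hb k (q t)) cross3Nr opprK.
  rewrite opprK -/(dot3 _ b) dot3_suml big1 // => k _; exact: dot3_cross.
move=> c; apply: hd_mul; first exact: hd_entry H2.
exact: hd_cst.
Qed.
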